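(* Let $m\ge 1$ and $n$ be integers with $\binom{m+1}{2}\le n\le J(m)$, where $J(m)=\sum_{j=1}^m j\lfloor m/j\rfloor$. Then there exist symmetric Knowlton-Graham partitions of $\{1,\ldots,n\}$ of order $m$. Equivalently, there is a symmetric $m\times m$ matrix with entries in $\{0,1\}$ whose row sums $(t_1,\ldots,t_m)$ (which equal its column sums) satisfy $j\mid t_j$ and $t_j\ge 1$ for all $1\le j\le m$, $t_m=m$, and $t_1+\cdots+t_m=n$. *)

(* Defs.v *)
From mathcomp Require Import all_boot all_algebra.
Set Implicit Arguments. Unset Strict Implicit. Unset Printing Implicit Defensive.

Definition J (m : nat) : nat := \sum_(1 <= j < m.+1) j * (m %/ j).

Definition rowsum (m : nat) (A : 'M[nat]_m) (i : 'I_m) : nat :=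
  \sum_(k < m) A i k.

(* Symmetric 0/1 m x m matrix whose row sums t_1..t_m (index j : 'I_m stands
   for the paper's j+1) satisfy (j+1) | t_j, t_j >= 1, t_m = m, sum = n. *)
Definition symKG_matrix (m n : nat) (A : 'M[nat]_m) : Prop :=
  [/\ (forall i k, A i k <= 1),
      trmx A = A,
      (forall j : 'I_m, (j.+1 %| rowsum A j) && (0 < rowsum A j)),
      (forall j : 'I_m, val j = m.-1 -> rowsum A j = m)
    & \sum_(j < m) rowsum A j = n].
Arguments symKG_matrix : clear implicits.

(* Main.v *)
Require Import Defs.
From mathcomp Require Import all_boot all_algebra all_fingroup.
From mathcomp Require Import zify.
Set Implicit Arguments. Unset Strict Implicit. Unset Printing Implicit Defensive.

Lemma tri_sum m : \sum_(i < m) i.+1 = 'C(m.+1, 2).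
Proof.
elim: m => [|m IH]; first by rewrite big_ord0 bin_small.
by rewrite big_ord_recr /= IH [RHS]binS bin1.
Qed.

Lemma hankel_sum (m' : nat) (u : nat -> nat) :
 (forall p, p < m' -> u p <= u p.+1 <= (u p).+1) -> u m' = m'.+1 ->
 forall a, a <= m' ->
 \sum_(0 <= b < m'.+1) ((m' <= a + b) || (u (a + b) == u (a + b).+1) : nat) = u a.
Proof.
move=> Hu Hm.
suff H : forall d a, a <= m' -> m' - a = d ->
  \sum_(0 <= b < m'.+1) ((m' <= a + b) || (u (a + b) == u (a + b).+1) : nat) = u a.
  by move=> a Ha; exact: (H _ a Ha erefl).
elim=> [|d IH] a Ha Hd.
  have -> : a = m' by lia.
  rewrite (eq_bigr (fun _ => 1)); last by move=> b _; rewrite leq_addr.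
  by rewrite sum_nat_const_nat subn0 muln1 Hm.
have Ham : a < m' by lia.
have IHa := IH a.+1 Ham (ltac:(lia)).
have key : \sum_(0 <= b < m'.+1) ((m' <= a + b) || (u (a + b) == u (a + b).+1) : nat) + 1
   = \sum_(0 <= b < m'.+1) ((m' <= a.+1 + b) || (u (a.+1 + b) == u (a.+1 + b).+1) : nat)
     + ((m' <= a) || (u a == u a.+1)).
  rewrite big_nat_recl // [in RHS]big_nat_recr //=.
  under eq_bigr => i _ do rewrite addnS -addSn.
  rewrite addn0 (_ : (m' <= a.+1 + m') = true) ?leq_addl /=; lia.
move: key; rewrite IHa leqNgt Ham /=.
have := Hu a Ham; case: eqP => [->|Hne] /= Hle; first by lia.
lia.
Qed.

Definition prec m (t : 'I_m -> nat) (i k : 'I_m) :=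
  (t i < t k) || ((t i == t k) && (i < k)).

Lemma prec_irr m (t : 'I_m -> nat) i : ~~ prec t i i.
Proof. by rewrite /prec ltnn eqxx ltnn. Qed.

Lemma prec_trans m (t : 'I_m -> nat) i j k : prec t i j -> prec t j k -> prec t i k.
Proof.
rewrite /prec => /orP[H1|/andP[/eqP E1 H1]] /orP[H2|/andP[/eqP E2 H2]]; apply/orP.
- by left; exact: ltn_trans H1 H2.
- by left; rewrite -E2.
- by left; rewrite E1.
- by right; rewrite E1 E2 eqxx (ltn_trans H1 H2).
Qed.

Lemma prec_total m (t : 'I_m -> nat) i k : i != k -> prec t i k || prec t k i.
Proof.
rewrite -val_eqE /prec => Hne.
case: (ltngtP (t i) (t k)) => E //=.
case: (ltngtP i k) => // E2.
by exfalso; move/eqP: Hne; apply; exact: E2.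
Qed.

Definition rk m (t : 'I_m -> nat) (j : 'I_m) := #|[pred i | prec t i j]|.

Lemma rk_lt m (t : 'I_m -> nat) j : rk t j < m.
Proof.
apply: (@leq_ltn_trans #|predC1 j|).
  apply: subset_leq_card; apply/subsetP => i; rewrite !inE.
  by apply: contraTneq => ->; rewrite prec_irr.
by rewrite cardC1 card_ord; case: m t j => [? []|].
Qed.

Lemma rk_mono m (t : 'I_m -> nat) i j : prec t i j -> rk t i < rk t j.
Proof.
move=> Hij; apply: proper_card; apply/properP; split.
  by apply/subsetP => k; rewrite !inE => Hk; exact: prec_trans Hk Hij.
by exists i; rewrite !inE ?Hij ?prec_irr.
Qed.

Lemma rk_inj m (t : 'I_m -> nat) : injective (fun j => Ordinal (rk_lt t j)).
Proof.
move=> i j /(congr1 val) /= E; apply/eqP; apply/negPn/negP => Hne.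
by case/orP: (prec_total t Hne) => /rk_mono; rewrite E ltnn.
Qed.

Lemma sig_mono m (t : 'I_m -> nat) a b :
  perm (@rk_inj _ t) a <= perm (@rk_inj _ t) b -> t a <= t b.
Proof.
rewrite !permE /= => H; rewrite leqNgt; apply/negP => Hlt.
have : prec t b a by rewrite /prec Hlt.
by move/rk_mono; rewrite ltnNge H.
Qed.

Lemma realize (m' : nat) (t : 'I_m'.+1 -> nat) :
  (forall i, t i <= m'.+1) -> (exists i, t i = m'.+1) ->
  (forall i v, t i <= v <= m'.+1 -> exists k, t k = v) ->
  exists A : 'M[nat]_m'.+1, [/\ (forall i k, A i k <= 1), trmx A = A &
     forall i, \sum_(k < m'.+1) A i k = t i].
Proof.
move=> tle [i0 Hi0] tint.
set s := perm (@rk_inj _ t).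
pose u p := t ((s^-1)%g (inord p)).
have uS : forall a, u (s a) = t a by move=> a; rewrite /u inord_val permK.
have Hmon : forall p, p < m' -> u p <= u p.+1 <= (u p).+1.
  move=> p Hp.
  have ea : s ((s^-1)%g (inord p)) = inord p by rewrite permKV.
  have eb : s ((s^-1)%g (inord p.+1)) = inord p.+1 by rewrite permKV.
  have vp : nat_of_ord (inord p : 'I_m'.+1) = p by rewrite inordK // ltnS ltnW.
  have vp1 : nat_of_ord (inord p.+1 : 'I_m'.+1) = p.+1 by rewrite inordK.
  apply/andP; split.
    by apply: sig_mono; rewrite -/s ea eb vp vp1.
  rewrite leqNgt; apply/negP => Hlt.
  have [k Hk] : exists k, t k = (u p).+1.
    apply: (tint ((s^-1)%g (inord p))); rewrite leqnSn /=.
    by apply: leq_trans (tle ((s^-1)%g (inord p.+1))); apply: ltnW.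
  case: (leqP (s k) p) => Hsk.
    have : t k <= u p by apply: sig_mono; rewrite -/s ea vp.
    by rewrite Hk ltnn.
  have : u p.+1 <= t k by apply: sig_mono; rewrite -/s eb vp1.
  by rewrite Hk leqNgt Hlt.
have Hm : u m' = m'.+1.
  apply/eqP; rewrite eqn_leq tle -{1}Hi0; apply: sig_mono.
  by rewrite -/s permKV inordK // -ltnS.
pose H a b := ((m' <= a + b) || (u (a + b) == u (a + b).+1)).
exists (\matrix_(i, k) (H (s i) (s k) : nat))%R; split.
- by move=> i k; rewrite mxE; case: (H _ _).
- by apply/matrixP => i k; rewrite !mxE /H addnC.
- move=> i.
  under eq_bigr do rewrite mxE.
  rewrite -(@reindex_inj _ _ _ _ s xpredT (fun b : 'I_m'.+1 => (H (s i) b : nat)) (@perm_inj _ s)) /=.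
  rewrite -(big_mkord xpredT (fun b => (H (s i) b : nat))).
  have Hsi : s i <= m' by rewrite -ltnS ltn_ord.
  by rewrite /H hankel_sum // uS.
Qed.

Definition upd (t : nat -> nat) a v := fun k => if k == a then v else t k.

Lemma sum_upd m t a v : a < m ->
  \sum_(k < m) upd t a v k + t a = \sum_(k < m) t k + v.
Proof.
elim: m => [//|m IH] Ha; rewrite !big_ord_recr /=.
case: (ltngtP a m) => H.
- have := IH H; rewrite /upd; have -> : (m == a) = false by apply/eqP; lia.
  by move=> E; rewrite addnAC E addnAC.
- lia.
- rewrite /upd H eqxx.
  rewrite (eq_bigr (fun k : 'I_m => t k)); first by lia.
  by move=> k _; have -> : (k == m :> nat) = false by apply/eqP; have := ltn_ord k; lia.
Qed.

Definition Fam m q (t : nat -> nat) := [/\ 1 <= q, 2 * q <= m + 2 &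
  forall i, i < m -> [/\ i.+1 %| t i, q <= t i, t i <= m & (q <= i.+1 -> t i = i.+1)]].

Lemma Jsum m : J m = \sum_(i < m) i.+1 * (m %/ i.+1).
Proof. by rewrite /J big_add1 /= big_mkord. Qed.

Lemma divmax d x m : 0 < d -> d %| x -> x <= m -> m < x + d -> x = d * (m %/ d).
Proof.
move=> Hd /dvdnP [c ->] H1 H2.
have -> : m %/ d = c.
  apply/eqP; rewrite eqn_leq leq_divRL // H1 andbT -ltnS ltn_divLR //.
  by rewrite mulSn addnC.
by rewrite mulnC.
Qed.

Lemma cover m : 1 <= m -> forall k, 'C(m.+1, 2) + k <= J m ->
  exists q t, Fam m q t /\ \sum_(i < m) t i = 'C(m.+1, 2) + k.
Proof.
move=> Hm; elim=> [|k IH] Hk.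
  exists 1, succn; split; last by rewrite tri_sum addn0.
  split => //; first by lia.
have Hk' : 'C(m.+1, 2) + k <= J m by lia.
have [q [t [[q1 q2 Ht] Hs]]] := IH Hk'.
have Hm0 : 0 < m by [].
have allmax : (forall i, i < m -> t i = i.+1 * (m %/ i.+1)) -> False.
  move=> Hmax; have : \sum_(i < m) t i = J m.
    by rewrite Jsum; apply: eq_bigr => i _; apply: Hmax.
  lia.
case: (leqP q 1) => Hq1.
  have t0 : t 0 = 1 by have [_ _ _ ->] := Ht 0 Hm0.
  case: (leqP 2 m) => Hm2.
    exists 2, (upd t 0 2); split.
      split => //; first by lia.
      move=> i Hi; rewrite /upd; case: eqP => [->|Hne] //.
      have [d1 d2 d3 d4] := Ht i Hi; have ti : t i = i.+1 by apply: d4; lia.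
      rewrite ti; split => //; lia.
    have := sum_upd t 2 Hm0; lia.
  exfalso; apply: allmax => i Hi.
  have -> : i = 0 by lia.
  have -> : m = 1 by lia.
  by rewrite t0.
have [t0d t0q t0m t0i] := Ht 0 Hm0.
case: (ltnP (t 0) m) => Ht0.
  exists q, (upd t 0 (t 0).+1); split.
    split => // i Hi; rewrite /upd; case: eqP => [->|_]; last exact: Ht.
    split => //; lia.
  have := sum_upd t (t 0).+1 Hm0; lia.
have t0e : t 0 = m by lia.
case: (boolP [exists i : 'I_m, (0 < i) && (i.+1 < q) && (t i + i.+1 <= m)]).
  case/existsP => i /andP[/andP[i0 iq] im].
  exists q, (upd (upd t i (t i + i.+1)) 0 (m - i)); split.
    split => // j Hj; rewrite /upd; case: eqP => [->|Hj0].
      split => //; lia.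
    case: eqP => [->|Hji]; last exact: Ht.
    have [d1 d2 d3 d4] := Ht i (ltn_ord i).
    split => //; [by rewrite dvdn_add | lia | lia].
  have e : upd t i (t i + i.+1) 0 = t 0.
    by rewrite /upd; case: eqP => // h; lia.
  have := sum_upd t (t i + i.+1) (ltn_ord i).
  have := sum_upd (upd t i (t i + i.+1)) (m - i) Hm0.
  rewrite e; lia.
move/existsPn => Hno.
case: (leqP (2 * q) m) => Hq.
  have Hqm : q.-1 < m by lia.
  exists q.+1, (upd (upd t q.-1 (2 * q)) 0 (m - q.-1)); split.
    split => //; first by lia.
    move=> j Hj; rewrite /upd; case: eqP => [->|Hj0].
      split => //; lia.
    case: eqP => [->|Hjq].
      rewrite prednK; last by lia.
      split; [exact: dvdn_mull | lia | lia | lia].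
    have [d1 d2 d3 d4] := Ht j Hj.
    split => //; last by move=> h; apply: d4; lia.
    case: (leqP q j.+1) => h.
      rewrite d4 //; lia.
    have := Hno (Ordinal Hj); rewrite /= h andbT.
    have -> : 0 < j by lia.
    move=> /= h2; lia.
  have e : upd t q.-1 (2 * q) 0 = t 0.
    by rewrite /upd; case: eqP => // h; lia.
  have tq : t q.-1 = q.
    have [_ _ _ d4] := Ht q.-1 Hqm; rewrite d4 prednK //; lia.
  have := sum_upd t (2 * q) Hqm.
  have := sum_upd (upd t q.-1 (2 * q)) (m - q.-1) Hm0.
  rewrite e tq; lia.
exfalso; apply: allmax => i Hi.
have [d1 d2 d3 d4] := Ht i Hi.
case: (leqP q i.+1) => h.
  rewrite d4 //; apply: divmax => //; lia.
case: (posnP i) => [->|ip].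
  by rewrite t0e divn1 mul1n.
apply: divmax => //.
have := Hno (Ordinal Hi); rewrite /= h ip andbT /=; lia.
Qed.

Theorem theorem2 (m n : nat) :
  1 <= m -> 'C(m.+1, 2) <= n -> n <= J m ->
  exists A : 'M[nat]_m, symKG_matrix m n A.
Proof.
case: m => [//|m'] _ Hlo Hhi.
have Hk : 'C(m'.+2, 2) + (n - 'C(m'.+2, 2)) <= J m'.+1 by rewrite subnKC.
have [q [t [[q1 q2 Ht] Hs]]] := cover (isT : 0 < m'.+1) Hk.
rewrite subnKC // in Hs.
have P1 : forall i : 'I_m'.+1, t i <= m'.+1.
  by move=> i; have [_ _ ? _] := Ht i (ltn_ord i).
have P2 : exists i : 'I_m'.+1, t i = m'.+1.
  exists ord_max; have [_ _ _ d4] := Ht m' (ltnSn _); apply: d4; lia.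
have P3 : forall (i : 'I_m'.+1) v, t i <= v <= m'.+1 -> exists k : 'I_m'.+1, t k = v.
  move=> i v /andP[h1 h2]; have [_ d2 _ _] := Ht i (ltn_ord i).
  have hv : v.-1 < m'.+1 by lia.
  exists (Ordinal hv); have [_ _ _ d4] := Ht v.-1 hv.
  rewrite /= d4 prednK //; lia.
have [A [A01 AT Arow]] := @realize m' (fun i : 'I_m'.+1 => t i) P1 P2 P3.
exists A; split => //.
- move=> j; rewrite /rowsum Arow; have [d1 d2 _ _] := Ht j (ltn_ord j).
  by rewrite d1 /=; lia.
- move=> j /= hj; rewrite /rowsum Arow; have [_ _ _ d4] := Ht j (ltn_ord j).
  rewrite hj in d4 *; apply: d4; lia.
- rewrite -Hs; apply: eq_bigr => j _; by rewrite /rowsum Arow.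
Qed.
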